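(* Let $M$ be a matroid flock on a finite set $E$. There is a unique function $g:\mathbb{Z}^E\to\mathbb{Z}$ such that (1) $g(0)=0$, and (2) $g(\alpha+e_I)=g(\alpha)+r_\alpha(I)$ for all $\alpha\in\mathbb{Z}^E$ and $I\subseteq E$.
   Context: $e_I:=\sum_{i\in I}e_i$ ($e_i$ unit vectors), $\mathbf{1}:=e_E$. A matroid flock of rank $d$ on $E$ is a map $M$ assigning to each $\alpha\in\mathbb{Z}^E$ a matroid $M_\alpha$ on $E$ of rank $d$ with (MF1) $M_\alpha/i=M_{\alpha+e_i}\setminus i$ for all $\alpha$, $i\in E$ (contraction, deletion); and (MF2) $M_\alpha=M_{\alpha+\mathbf{1}}$ for all $\alpha$. $r_\alpha$ denotes the rank function of $M_\alpha$. *)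

(* Defs.v *)
From mathcomp Require Import all_boot all_order all_algebra.
Set Implicit Arguments. Unset Strict Implicit. Unset Printing Implicit Defensive.
Import Order.TTheory GRing.Theory Num.Theory.

Definition is_matroid_rank (E : finType) (r : {set E} -> nat) : Prop :=
  [/\ forall A : {set E}, r A <= #|A|,
      forall A B : {set E}, A \subset B -> r A <= r B
    & forall A B : {set E}, r (A :|: B) + r (A :&: B) <= r A + r B]%N.

Definition zvec (E : finType) := {ffun E -> int}.

Definition shift (E : finType) (alpha : zvec E) (I : {set E}) : zvec E :=
  [ffun x => (alpha x + (x \in I)%:Z)%R].

Definition zvec0 (E : finType) : zvec E := [ffun _ => 0%R].

(* A matroid flock of rank d: M alpha is the rank function of M_alpha.
   (MF1) M_alpha / i = M_{alpha+e_i} \ i as matroids on E - i, i.e. for all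
   A ⊆ E - i: r_alpha(A ∪ i) - r_alpha(i) = r_{alpha+e_i}(A).
   (MF2) M_alpha = M_{alpha+1}. *)
Definition matroid_flock (E : finType) (d : nat) (M : zvec E -> {set E} -> nat)
  : Prop :=
  [/\ forall alpha, is_matroid_rank (M alpha) /\ M alpha setT = d,
      forall alpha (i : E) (A : {set E}), A \subset ~: [set i] ->
        (M alpha (i |: A) - M alpha [set i])%N = M (shift alpha [set i]) A
    & forall alpha (A : {set E}), M alpha A = M (shift alpha setT) A].

(* Main.v *)
Require Import Defs.
From mathcomp Require Import all_boot all_order all_algebra zify.
Import Order.TTheory GRing.Theory Num.Theory.
Local Open Scope ring_scope.

Definition Iint (c : int -> int) (m : int) : int :=
  match m with
  | Posz n => \sum_(t < n) c (Posz t)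
  | Negz n => - \sum_(t < n.+1) c (Negz t)
  end.

Lemma Iint_step c m : Iint c (m + 1) = Iint c m + c m.
Proof.
case: m => n.
  have -> : (Posz n + 1 = Posz n.+1)%R by rewrite -addn1 PoszD.
  by rewrite /= big_ord_recr.
case: n => [|k].
  have -> : (Negz 0 + 1 = 0)%R by [].
  by rewrite /= big_ord1 big_ord0 addrC subrr.
have -> : (Negz k.+1 + 1 = Negz k)%R by rewrite !NegzE; lia.
rewrite /= (big_ord_recr k.+1) /=. by rewrite opprD addrNK.
Qed.

Lemma Iint_unique (c H : int -> int) :
  H 0 = 0 -> (forall m, H (m + 1) = H m + c m) -> forall m, H m = Iint c m.
Proof.
move=> H0 HS m.
have key: forall n : nat, H (Posz n) = Iint c (Posz n).
  elim=> [|n IH]; first by rewrite H0 /= big_ord0.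
  have -> : (Posz n.+1 = Posz n + 1)%R by rewrite -addn1 PoszD.
  by rewrite HS Iint_step IH.
case: m => n; first exact: key.
elim: n => [|n IH].
  have := HS (Negz 0); have := Iint_step c (Negz 0).
  have -> : (Negz 0 + 1 = 0)%R by [].
  rewrite H0 => a b. have e : Iint c 0 = 0 by rewrite /= big_ord0. lia.
have := HS (Negz n.+1); have := Iint_step c (Negz n.+1).
have -> : (Negz n.+1 + 1 = Negz n)%R by rewrite !NegzE; lia.
rewrite IH; lia.
Qed.

Lemma Iint_ext c1 c2 m : c1 =1 c2 -> Iint c1 m = Iint c2 m.
Proof. by move=> e; case: m => n /=; under eq_bigr do rewrite e. Qed.

Lemma Iint0 m : Iint (fun=> 0) m = 0.
Proof. by case: m => n /=; rewrite big1 ?oppr0. Qed.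

Section Pot.
Variable E : finType.

Definition upd (a : zvec E) x t : zvec E := [ffun y => if y == x then t else a y].

Lemma upd_shift_same (a : zvec E) (x : E) (t : int) : upd (shift a [set x]) x t = upd a x t.
Proof. by apply/ffunP => y; rewrite !ffunE inE; case: eqP => // _; rewrite addr0. Qed.

Lemma shift_x_val (a : zvec E) (x : E) : (shift a [set x]) x = a x + 1.
Proof. by rewrite ffunE set11. Qed.

Lemma shift_other_val (a : zvec E) (i x : E) : i != x -> (shift a [set i]) x = a x.
Proof. by move=> ne; rewrite ffunE inE eq_sym (negbTE ne) addr0. Qed.

Lemma upd_id (a : zvec E) (x : E) : upd a x (a x) = a.
Proof. by apply/ffunP => y; rewrite !ffunE; case: eqP => // ->. Qed.

Lemma upd_succ (a : zvec E) (x : E) (t : int) : upd a x (t + 1) = shift (upd a x t) [set x].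
Proof. by apply/ffunP => y; rewrite !ffunE inE; case: eqP => //; rewrite addr0. Qed.

Lemma upd_shift_other (a : zvec E) (i x : E) (t : int) : i != x ->
  upd (shift a [set i]) x t = shift (upd a x t) [set i].
Proof.
move=> ne; apply/ffunP => y; rewrite !ffunE inE; case: eqP => // ->.
by rewrite eq_sym (negbTE ne) addr0.
Qed.

Variable f : zvec E -> E -> int.
Hypothesis comm : forall a i j,
  f a i + f (shift a [set i]) j = f a j + f (shift a [set j]) i.

Lemma potential (s : seq E) : exists G : zvec E -> int,
  forall a i, i \in s -> G (shift a [set i]) = G a + f a i.
Proof.
elim: s => [|x s [G HG]]; first by exists (fun=> 0).
exists (fun a => G (upd a x 0) + Iint (fun t => f (upd a x t) x) (a x)).
move=> a i; rewrite inE; case: eqVneq => [-> _|ne /= iS].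
  rewrite upd_shift_same shift_x_val Iint_step upd_shift_same upd_id.
  rewrite (@Iint_ext _ (fun t => f (upd a x t) x)); first by rewrite addrA.
  by move=> t; rewrite upd_shift_same.
rewrite upd_shift_other // HG // shift_other_val //.
have -> : Iint (fun t => f (upd (shift a [set i]) x t) x) (a x) =
   Iint (fun t => f (upd a x t) x) (a x) + f (upd a x (a x)) i - f (upd a x 0) i.
  apply/esym; apply: (@Iint_unique _ (fun m => Iint (fun t => f (upd a x t) x) m + f (upd a x m) i - f (upd a x 0) i)).
    by rewrite /= big_ord0 add0r subrr.
  move=> m; rewrite Iint_step upd_shift_other // upd_succ.
  have := comm (upd a x m) x i; lia.
rewrite upd_id; lia.
Qed.

Lemma const_unique (h : zvec E -> int) :
  (forall a i, h (shift a [set i]) = h a) -> forall a, h a = h [ffun _ => 0].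
Proof.
move=> Hh.
have L : forall a x t, h (upd a x t) = h (upd a x 0).
  move=> a x t.
  have E1 : h (upd a x t) - h (upd a x 0) = 0.
    transitivity (Iint (fun=>0) t); last exact: Iint0.
    apply: (@Iint_unique (fun=>0) (fun t => h (upd a x t) - h (upd a x 0))).
      by rewrite subrr.
    by move=> m; rewrite upd_succ Hh addr0.
  by apply/eqP; rewrite -subr_eq0 E1.
suff S : forall (s : seq E) (a : zvec E), (forall y, y \notin s -> a y = 0) -> h a = h [ffun _ => 0].
  by move=> a; apply: (S (enum E)) => y; rewrite mem_enum.
elim=> [|x s IH] a Ha.
  by congr h; apply/ffunP => y; rewrite ffunE Ha.
rewrite -(upd_id a x) L; apply: IH => y yS; rewrite ffunE.
by case: eqVneq => // ne; apply: Ha; rewrite inE negb_or ne.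
Qed.
End Pot.

From Stdlib Require Import FunctionalExtensionality.

Theorem mainTheorem11 (E : finType) (d : nat) (M : zvec E -> {set E} -> nat) :
  matroid_flock d M ->
  exists! g : zvec E -> int,
    g (zvec0 E) = 0%R /\
    forall (alpha : zvec E) (I : {set E}),
      g (shift alpha I) = (g alpha + (M alpha I)%:Z)%R.
Proof.
move=> [Hrk HMF1 _].
have rank0 : forall a, M a set0 = 0%N.
  move=> a; have [[H1 _ _] _] := Hrk a; have := H1 set0; rewrite cards0; lia.
have mono : forall a (A B : {set E}), A \subset B -> (M a A <= M a B)%N.
  by move=> a A B sAB; have [[_ H2 _] _] := Hrk a; exact: H2.
have contr : forall a i (J : {set E}), i \notin J ->
    M a (i |: J) = (M a [set i] + M (shift a [set i]) J)%N.
  move=> a i J iJ.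
  have sJ : J \subset ~: [set i].
    by apply/subsetP => y yJ; rewrite !inE; apply: contraNneq iJ => <-.
  have := HMF1 a i J sJ; have := mono a [set i] (i |: J) (subsetUl _ _); lia.
pose f := fun a i => (M a [set i])%:Z.
have comm : forall a i j, f a i + f (shift a [set i]) j = f a j + f (shift a [set j]) i.
  move=> a i j; case: (eqVneq i j) => [->//|ne].
  have h1 := contr a i [set j]; have h2 := contr a j [set i].
  rewrite setUC in h2.
  have n1 : i \notin [set j] by rewrite inE. have n2 : j \notin [set i] by rewrite inE eq_sym.
  rewrite /f; have := h1 n1; have := h2 n2; lia.
have [G HG] := @potential _ f comm (enum E).
pose g := fun a => G a - G (zvec0 E).
have step1 : forall a i, g (shift a [set i]) = g a + f a i.
  by move=> a i; rewrite /g HG ?mem_enum //; lia.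
have stepI : forall n (I : {set E}) a, #|I| = n -> g (shift a I) = g a + (M a I)%:Z.
  elim=> [|n IH] I a cI.
    move/eqP: cI; rewrite cards_eq0 => /eqP ->.
    rewrite rank0 addr0; congr g; apply/ffunP => y; rewrite ffunE inE.
    by rewrite addr0.
  have [i iI] : exists i, i \in I.
    by apply/set0Pn; rewrite -card_gt0 cI.
  have iJ : i \notin I :\ i by rewrite !inE eqxx.
  have eI : I = i |: (I :\ i) by rewrite setD1K.
  have cJ : #|I :\ i| = n by move: cI; rewrite (cardsD1 i I) iI; lia.
  have -> : shift a I = shift (shift a [set i]) (I :\ i).
    apply/ffunP => y; rewrite !ffunE [in LHS]eI !inE.
    case: (eqVneq y i) => [->|ne] /=; last by rewrite addr0.
    by rewrite addr0.
  rewrite IH // step1 eI contr // -eI /f; lia.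
exists g; split.
  split; first by rewrite /g subrr.
  by move=> a I; apply: stepI.
move=> g' [g0 g'S]; apply: functional_extensionality => a.
have := @const_unique E (fun a => g a - g' a) _ a.
have g00 : g (zvec0 E) = 0 by rewrite /g subrr.
move: g0 g00; rewrite /zvec0 => -> -> /=.
have : forall a i, g (shift a [set i]) - g' (shift a [set i]) = g a - g' a.
  by move=> b i; rewrite step1 g'S /f; lia.
move=> H /(_ H); lia.
Qed.
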